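(* Let $\mathcal{C},\mathcal{D}$ be generalized categories and $F:\mathcal{C}\to\mathcal{D}$, $G:\mathcal{D}\to\mathcal{C}$ functors. The following are equivalent: (1) there are natural transformations $\eta:\mathrm{id}_{\mathcal{C}}\Rightarrow G\circ F$ and $\varepsilon:F\circ G\Rightarrow \mathrm{id}_{\mathcal{D}}$ such that $(F,G,\eta,\varepsilon)$ is an adjunction, i.e. $G(\varepsilon(y))\cdot\eta(G(y)) = 1_{G(y)}$ for all $y\in\mathcal{D}$ and $\varepsilon(F(x))\cdot F(\eta(x)) = 1_{F(x)}$ for all $x\in\mathcal{C}$; (2) for every $f\in\mathcal{C}$ and $g\in\mathcal{D}$ there is a bijection $\phi_{f,g}:\hom(F(f),g)\to\hom(f,G(g))$ which is natural in $f$ and $g$, meaning: for all $f,f'\in\mathcal{C}$, $g\in\mathcal{D}$, $v\in\hom(f,f')$, $u\in\hom(F(f'),g)$ with $u\cdot F(v)$ defined, $\phi_{f,g}(u\cdot F(v))=\phi_{f',g}(u)\cdot v$; and for all $f\in\mathcal{C}$, $g,g'\in\mathcal{D}$, $v\in\hom(F(f),g)$, $v'\in\hom(g,g')$ with $v'\cdot v$ defined, $\phi_{f,g'}(v'\cdot v)=G(v')\cdot\phi_{f,g}(v)$.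
   Context: A generalized category is a tuple $(\mathcal{C},\le,s,t,\cdot)$ where $\mathcal{C}$ is a set, $\le$ a relation on $\mathcal{C}$, $s,t:\mathcal{C}\to\mathcal{C}$ maps (write $\bar a = s(a)$, $\hat a = t(a)$), and $\cdot$ a partially defined binary operation (write $ab$), such that: (1) $\le$ is a partial order; (2) $ab$ is defined iff $s(a)\le t(b)$; (3) if $(ab)c$ or $a(bc)$ is defined then $(ab)c=a(bc)$; (4) if $ab$ is defined then $s(ab)=s(b)$ and $t(ab)=t(a)$; (5) for every $a$ there is $b$ with $s(b)=t(b)=a$ such that $bc=c$ whenever $bc$ is defined and $cb=c$ whenever $cb$ is defined; this $b$ is unique, denoted $1_a$; (6) if $s(a)=t(a)=a$ then $ba=b$ whenever $ba$ is defined and $ab=b$ whenever $ab$ is defined; (7) if $a\le b$ then $s(a)\le s(b)$, $t(a)\le t(b)$ and $1_a\le 1_b$; and if $a\le b$, $c\le d$ and $ac,bd$ are defined then $ac\le bd$. $\hom(a,b)=\{c\in\mathcal{C}:\bar c=a,\hat c=b\}$. A functor $F:\mathcal{C}\to\mathcal{D}$ is a map with $a\le b\Rightarrow F(a)\le F(b)$, $F(\bar a)=\overline{F(a)}$, $F(\hat a)=\widehat{F(a)}$, $F(ab)=F(a)F(b)$ whenever $ab$ is defined, and $F(1_a)=1_{F(a)}$. For functors $F,G:\mathcal{C}\to\mathcal{D}$, a natural transformation $F\Rightarrow G$ is a pair $(\theta_1,\theta_2)$ of maps $\mathcal{C}\to\mathcal{D}$ such that for all $a$, $\theta_1(a)F(a)$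 and $G(a)\theta_2(a)$ are defined and equal, $\theta_1(a)=\theta_1(b)$ whenever $\hat a=\hat b$, and $\theta_2(a)=\theta_2(b)$ whenever $\bar a=\bar b$; it is identified with the map $\theta(x):=\theta_1(1_x)$ ($=\theta_2(1_x)$), which satisfies $\theta(\hat f)\cdot F(f)=G(f)\cdot\theta(\bar f)$. *)

(* Defs.v *)
From mathcomp Require Import ssreflect ssrfun ssrbool.
From Stdlib Require Import ClassicalEpsilon.

Set Implicit Arguments.
Unset Strict Implicit.
Unset Printing Implicit Defensive.

(* The product xy is defined iff s(x) <= t(y) (axiom (2)). *)
Definition is_unit_for {T : Type} (le : T -> T -> Prop) (s t : T -> T)
  (mul : T -> T -> T) (a b : T) : Prop :=
  s b = a /\ t b = a /\
  (forall c, le (s b) (t c) -> mul b c = c) /\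
  (forall c, le (s c) (t b) -> mul c b = c).

(* The partial product is represented by a total
   function [gmul]; by axiom (2) the product [gmul a b] is *defined* exactly
   when [gle (gsrc a) (gtgt b)], and its value is meaningless otherwise. *)
Record gcat := GCat {
  gcarrier :> Type;
  gle : gcarrier -> gcarrier -> Prop;
  gsrc : gcarrier -> gcarrier;
  gtgt : gcarrier -> gcarrier;
  gmul : gcarrier -> gcarrier -> gcarrier;
  gle_refl : forall a, gle a a;
  gle_trans : forall a b c, gle a b -> gle b c -> gle a c;
  gle_antisym : forall a b, gle a b -> gle b a -> a = b;
  gassoc_l : forall a b c, gle (gsrc a) (gtgt b) ->
     gle (gsrc (gmul a b)) (gtgt c) ->
     gle (gsrc b) (gtgt c) /\ gle (gsrc a) (gtgt (gmul b c)) /\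
     gmul (gmul a b) c = gmul a (gmul b c);
  gassoc_r : forall a b c, gle (gsrc b) (gtgt c) ->
     gle (gsrc a) (gtgt (gmul b c)) ->
     gle (gsrc a) (gtgt b) /\ gle (gsrc (gmul a b)) (gtgt c) /\
     gmul (gmul a b) c = gmul a (gmul b c);
  gsrc_mul : forall a b, gle (gsrc a) (gtgt b) -> gsrc (gmul a b) = gsrc b;
  gtgt_mul : forall a b, gle (gsrc a) (gtgt b) -> gtgt (gmul a b) = gtgt a;
  gunit_ex : forall a, exists! b, is_unit_for gle gsrc gtgt gmul a b;
  gid_unit : forall a, gsrc a = a -> gtgt a = a ->
     (forall b, gle (gsrc b) (gtgt a) -> gmul b a = b) /\
     (forall b, gle (gsrc a) (gtgt b) -> gmul a b = b);
  gle_src : forall a b, gle a b -> gle (gsrc a) (gsrc b);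
  gle_tgt : forall a b, gle a b -> gle (gtgt a) (gtgt b);
  gle_unit : forall a b ia ib, gle a b ->
     is_unit_for gle gsrc gtgt gmul a ia ->
     is_unit_for gle gsrc gtgt gmul b ib -> gle ia ib;
  gle_mul : forall a b c d, gle a b -> gle c d ->
     gle (gsrc a) (gtgt c) -> gle (gsrc b) (gtgt d) ->
     gle (gmul a c) (gmul b d)
}.

Arguments gle {g} _ _.
Arguments gsrc {g} _.
Arguments gtgt {g} _.
Arguments gmul {g} _ _.

Lemma gunit_ex' (C : gcat) (a : C) :
  exists b, is_unit_for gle gsrc gtgt gmul a b.
Proof. by case: (gunit_ex a) => b [Hb _]; exists b. Qed.

Definition gone {C : gcat} (a : C) : C :=
  proj1_sig (constructive_indefinite_description _ (gunit_ex' a)).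

Definition ghom (C : gcat) (a b : C) : Type :=
  { c : C | gsrc c = a /\ gtgt c = b }.

Record gfunctor (C D : gcat) := GFunctor {
  gfmap :> C -> D;
  gf_mono : forall a b : C, gle a b -> gle (gfmap a) (gfmap b);
  gf_src : forall a : C, gfmap (gsrc a) = gsrc (gfmap a);
  gf_tgt : forall a : C, gfmap (gtgt a) = gtgt (gfmap a);
  gf_mul : forall a b : C, gle (gsrc a) (gtgt b) ->
     gfmap (gmul a b) = gmul (gfmap a) (gfmap b);
  gf_one : forall a : C, gfmap (gone a) = gone (gfmap a)
}.

Definition is_nat_trans (C D : gcat) (F G : C -> D) (th1 th2 : C -> D) : Prop :=
  (forall a : C,
     gle (gsrc (th1 a)) (gtgt (F a)) /\
     gle (gsrc (G a)) (gtgt (th2 a)) /\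
     gmul (th1 a) (F a) = gmul (G a) (th2 a)) /\
  (forall a b : C, gtgt a = gtgt b -> th1 a = th1 b) /\
  (forall a b : C, gsrc a = gsrc b -> th2 a = th2 b).

(* The map x |-> theta(x) := theta_1(1_x) identified with (th1, th2). *)
Definition nt_comp {C D : gcat} (th1 : C -> D) (x : C) : D := th1 (gone x).

(* Main.v *)
Require Import Defs.
From mathcomp Require Import ssreflect ssrfun ssrbool.
From Stdlib Require Import ProofIrrelevance ClassicalEpsilon.
Set Implicit Arguments.
Unset Strict Implicit.

Lemma gone_unit (C : gcat) (a : C) : is_unit_for gle gsrc gtgt gmul a (gone a).
Proof. rewrite /gone; case: constructive_indefinite_description => //. Qed.

Lemma src_one (C : gcat) (a : C) : gsrc (gone a) = a.
Proof. by case: (gone_unit a). Qed.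
Lemma tgt_one (C : gcat) (a : C) : gtgt (gone a) = a.
Proof. by case: (gone_unit a) => _ []. Qed.
Lemma mul1c' (C : gcat) (a c : C) : gle a (gtgt c) -> gmul (gone a) c = c.
Proof. case: (gone_unit a) => Hs [_ [H1 _]] H; apply: H1; by rewrite Hs. Qed.
Lemma mulc1' (C : gcat) (a c : C) : gle (gsrc c) a -> gmul c (gone a) = c.
Proof. case: (gone_unit a) => _ [Ht [_ H2]] H; apply: H2; by rewrite Ht. Qed.
Lemma eqle (C : gcat) (x y : C) : x = y -> gle x y.
Proof. move=> ->; apply: gle_refl. Qed.
Lemma mul1c (C : gcat) (a c : C) : gtgt c = a -> gmul (gone a) c = c.
Proof. move=> H; apply: mul1c'; by apply: eqle. Qed.
Lemma mulc1 (C : gcat) (a c : C) : gsrc c = a -> gmul c (gone a) = c.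
Proof. move=> H; apply: mulc1'; by apply: eqle. Qed.
Lemma srcM (C : gcat) (a b : C) : gsrc a = gtgt b -> gsrc (gmul a b) = gsrc b.
Proof. move=> H; apply: gsrc_mul; by apply: eqle. Qed.
Lemma tgtM (C : gcat) (a b : C) : gsrc a = gtgt b -> gtgt (gmul a b) = gtgt a.
Proof. move=> H; apply: gtgt_mul; by apply: eqle. Qed.
Lemma assoc (C : gcat) (a b c : C) : gsrc a = gtgt b -> gsrc b = gtgt c ->
  gmul (gmul a b) c = gmul a (gmul b c).
Proof.
move=> H1 H2; have [_ [_ ->]] := gassoc_l (eqle H1) (eqle (etrans (srcM H1) H2)).
done.
Qed.
Lemma fM (C D : gcat) (F : gfunctor C D) (a b : C) : gsrc a = gtgt b ->
  F (gmul a b) = gmul (F a) (F b).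
Proof. move=> H; apply: gf_mul; by apply: eqle. Qed.
Lemma fsrc (C D : gcat) (F : gfunctor C D) (a : C) : gsrc (F a) = F (gsrc a).
Proof. by rewrite gf_src. Qed.
Lemma ftgt (C D : gcat) (F : gfunctor C D) (a : C) : gtgt (F a) = F (gtgt a).
Proof. by rewrite gf_tgt. Qed.

Lemma ghom_eq (C : gcat) (a b : C) (x y : ghom a b) :
  proj1_sig x = proj1_sig y -> x = y.
Proof.
case: x => x px; case: y => y py /= E; subst y; f_equal; apply: proof_irrelevance.
Qed.

Lemma nt_facts (C D : gcat) (F' G' : C -> D) th1 th2 :
 is_nat_trans F' G' th1 th2 ->
 (forall x, F' (gone x) = gone (F' x)) -> (forall x, G' (gone x) = gone (G' x)) ->
 (forall x, th2 (gone x) = th1 (gone x)) /\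
 (forall x, gsrc (th1 (gone x)) = F' x) /\
 (forall x, gtgt (th1 (gone x)) = G' x) /\
 (forall w, gmul (th1 (gone (gtgt w))) (F' w) = gmul (G' w) (th1 (gone (gsrc w)))).
Proof.
move=> [Hn [H1 H2]] HF HG.
have E : forall x, th2 (gone x) = th1 (gone x).
  move=> x; case: (Hn (gone x)) => d1 [d2 e].
  move: d1 d2 e; rewrite HF HG tgt_one src_one => d1 d2 e.
  by rewrite mulc1' // mul1c' // in e.
split; first exact: E.
split.
  move=> x; case: (Hn (gone x)) => d1 _.
  have := gsrc_mul d1; rewrite HF src_one mulc1' //.
  by move: d1; rewrite HF tgt_one.
split.
  move=> x; case: (Hn (gone x)) => _ [d2 _].
  have := gtgt_mul d2; rewrite HG tgt_one E; move=> <-.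
  by rewrite mul1c' //; move: d2; rewrite HG src_one E.
move=> w; case: (Hn w) => _ [_ e].
have h1 : th1 (gone (gtgt w)) = th1 w by apply: H1; rewrite tgt_one.
have h2 : th1 (gone (gsrc w)) = th2 w by rewrite -E; apply: H2; rewrite src_one.
by rewrite h1 h2.
Qed.

Definition idh (C : gcat) (a : C) : ghom a a :=
  exist _ (gone a) (conj (src_one a) (tgt_one a)).
Definition mkh (C : gcat) (c : C) : ghom (gsrc c) (gtgt c) :=
  exist _ c (conj erefl erefl).

Theorem mainTheorem2 (C D : gcat) (F : gfunctor C D) (G : gfunctor D C) :
  (exists (eta1 eta2 : C -> C) (eps1 eps2 : D -> D),
     is_nat_trans (fun x : C => x) (fun x : C => G (F x)) eta1 eta2 /\
     is_nat_trans (fun y : D => F (G y)) (fun y : D => y) eps1 eps2 /\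
     (forall y : D,
        gmul (G (nt_comp eps1 y)) (nt_comp eta1 (G y)) = gone (G y)) /\
     (forall x : C,
        gmul (nt_comp eps1 (F x)) (F (nt_comp eta1 x)) = gone (F x)))
  <->
  (exists phi : forall (f : C) (g : D), ghom (F f) g -> ghom f (G g),
     (forall (f : C) (g : D), bijective (phi f g)) /\
     (forall (f f' : C) (g : D) (v : ghom f f') (u : ghom (F f') g)
             (x : ghom (F f) g),
        gle (gsrc (proj1_sig u)) (gtgt (F (proj1_sig v))) ->
        proj1_sig x = gmul (proj1_sig u) (F (proj1_sig v)) ->
        proj1_sig (phi f g x) = gmul (proj1_sig (phi f' g u)) (proj1_sig v)) /\
     (forall (f : C) (g g' : D) (v : ghom (F f) g) (v' : ghom g g')
             (x : ghom (F f) g'),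
        gle (gsrc (proj1_sig v')) (gtgt (proj1_sig v)) ->
        proj1_sig x = gmul (proj1_sig v') (proj1_sig v) ->
        proj1_sig (phi f g' x) = gmul (G (proj1_sig v')) (proj1_sig (phi f g v)))).
Proof.
split.
- move=> [eta1 [eta2 [eps1 [eps2 [Heta [Heps [T1 T2]]]]]]].
  rewrite /nt_comp in T1 T2.
  have [_ [Hes [Het Hen]]] := nt_facts Heta (fun x => erefl)
    (fun x => etrans (f_equal G (gf_one F x)) (gf_one G (F x))).
  have [_ [Ees [Eet Een]]] := nt_facts Heps
    (fun x => etrans (f_equal F (gf_one G x)) (gf_one F (G x))) (fun x => erefl).
  simpl in *.
  have phi_ok : forall f g (u : ghom (F f) g),
      gsrc (gmul (G (proj1_sig u)) (eta1 (gone f))) = f /\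
      gtgt (gmul (G (proj1_sig u)) (eta1 (gone f))) = G g.
    move=> f g [u [us ut]] /=.
    have d : gsrc (G u) = gtgt (eta1 (gone f)) by rewrite fsrc us Het.
    by rewrite srcM // tgtM // Hes ftgt ut.
  have psi_ok : forall f g (w : ghom f (G g)),
      gsrc (gmul (eps1 (gone g)) (F (proj1_sig w))) = F f /\
      gtgt (gmul (eps1 (gone g)) (F (proj1_sig w))) = g.
    move=> f g [w [ws wt]] /=.
    have d : gsrc (eps1 (gone g)) = gtgt (F w) by rewrite Ees ftgt wt.
    by rewrite srcM // tgtM // Eet fsrc ws.
  exists (fun f g u => exist (fun c => gsrc c = f /\ gtgt c = G g) _ (phi_ok f g u)).
  split; last split.
  + move=> f g.
    exists (fun w => exist (fun c => gsrc c = F f /\ gtgt c = g) _ (psi_ok f g w)).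
    * move=> [u [us ut]]; apply: ghom_eq => /=.
      have d1 : gsrc (G u) = gtgt (eta1 (gone f)) by rewrite fsrc us Het.
      have d2 : gsrc (eps1 (gone g)) = gtgt (F (G u)) by rewrite Ees !ftgt ut.
      have d3 : gsrc (F (G u)) = gtgt (F (eta1 (gone f))) by rewrite !fsrc us ftgt Het.
      have d4 : gsrc u = gtgt (eps1 (gone (F f))) by rewrite us Eet.
      have d5 : gsrc (eps1 (gone (F f))) = gtgt (F (eta1 (gone f))) by rewrite Ees ftgt Het.
      have e := Een u; rewrite us ut in e.
      by rewrite (fM F d1) -(assoc d2 d3) e (assoc d4 d5) T2 mulc1.
    * move=> [w [ws wt]]; apply: ghom_eq => /=.
      have d1 : gsrc (eps1 (gone g)) = gtgt (F w) by rewrite Ees ftgt wt.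
      have d2 : gsrc (G (eps1 (gone g))) = gtgt (G (F w)) by rewrite fsrc Ees !ftgt wt.
      have d3 : gsrc (G (F w)) = gtgt (eta1 (gone f)) by rewrite !fsrc ws Het.
      have d4 : gsrc (G (eps1 (gone g))) = gtgt (eta1 (gone (G g))) by rewrite fsrc Ees Het.
      have d5 : gsrc (eta1 (gone (G g))) = gtgt w by rewrite Hes wt.
      have e := Hen w; rewrite ws wt in e.
      by rewrite (fM G d1) (assoc d2 d3) -e -(assoc d4 d5) T1 mul1c.
  + move=> f f' g [v [vs vt]] [u [us ut]] [x [xs xt]] /= _ ->.
    have d : gsrc u = gtgt (F v) by rewrite us ftgt vt.
    have d2 : gsrc (G u) = gtgt (G (F v)) by rewrite fsrc d !ftgt.
    have d3 : gsrc (G (F v)) = gtgt (eta1 (gone f)) by rewrite !fsrc vs Het.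
    have d4 : gsrc (G u) = gtgt (eta1 (gone f')) by rewrite fsrc us Het.
    have d5 : gsrc (eta1 (gone f')) = gtgt v by rewrite Hes vt.
    have e := Hen v; rewrite vs vt in e.
    by rewrite (fM G d) (assoc d2 d3) -e (assoc d4 d5).
  + move=> f g g' [v [vs vt]] [v' [vs' vt']] [x [xs xt]] /= _ ->.
    have d : gsrc v' = gtgt v by rewrite vs' vt.
    have d2 : gsrc (G v') = gtgt (G v) by rewrite fsrc d ftgt.
    have d3 : gsrc (G v) = gtgt (eta1 (gone f)) by rewrite fsrc vs Het.
    by rewrite (fM G d) (assoc d2 d3).
- move=> [phi [Hbij [Nf Ng]]].
  have inv : forall f g, {h : ghom f (G g) -> ghom (F f) g |
      cancel (phi f g) h /\ cancel h (phi f g)}.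
    move=> f g; apply: constructive_indefinite_description.
    by case: (Hbij f g) => h c1 c2; exists h.
  have pinj : forall f g (x1 x2 : ghom (F f) g),
      proj1_sig (phi f g x1) = proj1_sig (phi f g x2) -> proj1_sig x1 = proj1_sig x2.
    move=> f g x1 x2 /ghom_eq E.
    case: (inv f g) => h [c1 _].
    by rewrite -(c1 x1) E c1.
  pose eh := fun x => phi x (F x) (idh (F x)).
  pose ph := fun y => proj1_sig (inv (G y) y) (idh (G y)).
  pose et := fun x => proj1_sig (eh x).
  pose ep := fun y => proj1_sig (ph y).
  have Hes : forall x, gsrc (et x) = x by move=> x; case: (proj2_sig (eh x)).
  have Het : forall x, gtgt (et x) = G (F x) by move=> x; case: (proj2_sig (eh x)).
  have Ees : forall y, gsrc (ep y) = F (G y) by move=> y; case: (proj2_sig (ph y)).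
  have Eet : forall y, gtgt (ep y) = y by move=> y; case: (proj2_sig (ph y)).
  have Pep : forall y, proj1_sig (phi (G y) y (ph y)) = gone (G y).
    move=> y; rewrite /ph; case: (inv (G y) y) => h [_ c2] /=; by rewrite c2.
  exists (fun a => et (gtgt a)), (fun a => et (gsrc a)),
         (fun a => ep (gtgt a)), (fun a => ep (gsrc a)).
  split; last split; last split.
  + split; last split.
    * move=> a /=; split; first by rewrite Hes; apply: gle_refl.
      split; first by rewrite Het -!gf_src; apply: gle_refl.
      pose xa := exist (fun c => gsrc c = F (gsrc a) /\ gtgt c = F (gtgt a)) (F a)
         (conj (fsrc F a) (ftgt F a)).
      have e1 := Nf _ _ _ (mkh a) (idh (F (gtgt a))) xa.
      have e2 := Ng _ _ _ (idh (F (gsrc a))) xa xa.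
      rewrite /= in e1 e2.
      have c1 : gle (gsrc (gone (F (gtgt a)))) (gtgt (F a)).
        by rewrite src_one ftgt; apply: gle_refl.
      have c2 : F a = gmul (gone (F (gtgt a))) (F a) by rewrite mul1c // ftgt.
      have c3 : gle (gsrc (F a)) (gtgt (gone (F (gsrc a)))).
        by rewrite tgt_one fsrc; apply: gle_refl.
      have c4 : F a = gmul (F a) (gone (F (gsrc a))) by rewrite mulc1 // fsrc.
      by rewrite -(e1 c1 c2) -(e2 c3 c4).
    * by move=> a b /= ->.
    * by move=> a b /= ->.
  + split; last split.
    * move=> a /=; split; first by rewrite Ees !ftgt; apply: gle_refl.
      split; first by rewrite Eet; apply: gle_refl.
      have d1 : gsrc (ep (gtgt a)) = gtgt (F (G a)) by rewrite Ees !ftgt.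
      have d2 : gsrc a = gtgt (ep (gsrc a)) by rewrite Eet.
      have p1 : gsrc (gmul (ep (gtgt a)) (F (G a))) = F (G (gsrc a)) /\
                gtgt (gmul (ep (gtgt a)) (F (G a))) = gtgt a.
        by rewrite srcM // tgtM // Eet !fsrc.
      have p2 : gsrc (gmul a (ep (gsrc a))) = F (G (gsrc a)) /\
                gtgt (gmul a (ep (gsrc a))) = gtgt a.
        by rewrite srcM // tgtM // Ees.
      pose x1 := exist (fun c => gsrc c = F (G (gsrc a)) /\ gtgt c = gtgt a) _ p1.
      pose x2 := exist (fun c => gsrc c = F (G (gsrc a)) /\ gtgt c = gtgt a) _ p2.
      pose ga := exist (fun c => gsrc c = G (gsrc a) /\ gtgt c = G (gtgt a)) (G a)
         (conj (fsrc G a) (ftgt G a)).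
      apply: (pinj _ _ x1 x2).
      have e1 := Nf _ _ _ ga (ph (gtgt a)) x1.
      have e2 := Ng _ _ _ (ph (gsrc a)) (mkh a) x2.
      rewrite /= in e1 e2.
      rewrite (e1 (eqle d1) erefl) (e2 (eqle d2) erefl) Pep Pep.
      by rewrite mul1c ?mulc1 // ?fsrc ?ftgt.
    * by move=> a b /= ->.
    * by move=> a b /= ->.
  + move=> y; rewrite /nt_comp !tgt_one.
    have e := Ng _ _ _ (idh (F (G y))) (ph y) (ph y).
    rewrite /= in e.
    have c1 : gle (gsrc (ep y)) (gtgt (gone (F (G y)))).
      by rewrite Ees tgt_one; apply: gle_refl.
    have c2 : ep y = gmul (ep y) (gone (F (G y))) by rewrite mulc1 // Ees.
    rewrite -/(ep y) -/(et (G y)) -(e c1 c2).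
    by rewrite Pep.
  + move=> x; rewrite /nt_comp !tgt_one.
    have p1 : gsrc (gmul (ep (F x)) (F (et x))) = F x /\
              gtgt (gmul (ep (F x)) (F (et x))) = F x.
      by rewrite srcM ?tgtM ?Eet ?fsrc ?Hes // Ees ftgt Het.
    pose x1 := exist (fun c => gsrc c = F x /\ gtgt c = F x) _ p1.
    have -> : gone (F x) = proj1_sig (idh (F x)) by [].
    rewrite -/(ep (F x)) -/(et x).
    have -> : gmul (ep (F x)) (F (et x)) = proj1_sig x1 by [].
    apply: pinj.
    have e := Nf _ _ _ (eh x) (ph (F x)) x1.
    rewrite /= in e.
    have c1 : gle (gsrc (ep (F x))) (gtgt (F (et x))).
      by rewrite Ees ftgt Het; apply: gle_refl.
    rewrite (e c1 erefl).
    by rewrite Pep mul1c // Het.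
Qed.
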